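(* Let $\mathcal{K}^2_*$ denote the set of strictly convex bodies in $\mathbb{R}^2$, with the Hausdorff metric. The map $K\mapsto \mathcal{M}_K$ from $\mathcal{K}^2_*$ to the space of nonempty compact subsets of $\mathbb{R}^2$ (with the Hausdorff metric) is continuous.
   Context: A convex body is a nonempty compact convex subset of $\mathbb{R}^2$; it is strictly convex if its boundary contains no nondegenerate segment. For $K$ strictly convex and $u\in\mathbb{S}^1$, $x_K(u)$ denotes the unique point of $K$ on its supporting line with outer unit normal $u$, and $m_K(u)=\frac12[x_K(u)+x_K(-u)]$. The middle hedgehog is $\mathcal{M}_K=\{m_K(u): u\in\mathbb{S}^1\}$. *)

(* Defs.v *)
From Stdlib Require Import Reals.
Open Scope R_scope.

Definition pt := (R * R)%type.
Definition pset := pt -> Prop.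

Definition padd (p q : pt) : pt := (fst p + fst q, snd p + snd q).
Definition pscale (a : R) (p : pt) : pt := (a * fst p, a * snd p).
Definition popp (p : pt) : pt := (- fst p, - snd p).
Definition dot (p q : pt) : R := fst p * fst q + snd p * snd q.
Definition dist2 (p q : pt) : R :=
  sqrt ((fst p - fst q)^2 + (snd p - snd q)^2).

Definition unit_vec (u : pt) : Prop := (fst u)^2 + (snd u)^2 = 1.

Definition seq_conv (s : nat -> pt) (l : pt) : Prop :=
  forall eps, eps > 0 -> exists N, forall n, (n >= N)%nat -> dist2 (s n) l < eps.

(* compactness (sequential compactness, equivalent to compactness in metric spaces) *)
Definition compact2 (A : pset) : Prop :=
  forall s : nat -> pt, (forall n, A (s n)) ->
    exists (phi : nat -> nat) (l : pt),
      (forall n m, (n < m)%nat -> (phi n < phi m)%nat) /\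
      A l /\ seq_conv (fun n => s (phi n)) l.

Definition nonempty (A : pset) : Prop := exists p, A p.

Definition convex (A : pset) : Prop :=
  forall p q t, A p -> A q -> 0 <= t <= 1 ->
    A (padd (pscale (1 - t) p) (pscale t q)).

Definition convex_body (K : pset) : Prop := nonempty K /\ compact2 K /\ convex K.

Definition boundary (K : pset) (x : pt) : Prop :=
  K x /\ forall e, e > 0 -> exists y, dist2 x y < e /\ ~ K y.

Definition strictly_convex_body (K : pset) : Prop :=
  convex_body K /\
  ~ (exists p q, p <> q /\
       forall t, 0 <= t <= 1 -> boundary K (padd (pscale (1 - t) p) (pscale t q))).

Definition support_point (K : pset) (u x : pt) : Prop :=
  K x /\ forall y, K y -> dot y u <= dot x u.

(* middle hedgehog M_K = { (x_K(u) + x_K(-u))/2 : u in S^1 }.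
   For strictly convex K the support points are unique, so this is exactly
   { m_K(u) : u in S^1 }. *)
Definition middle_hedgehog (K : pset) : pset :=
  fun m => exists u x y, unit_vec u /\ support_point K u x /\
      support_point K (popp u) y /\ m = pscale (1/2) (padd x y).

(* Hausdorff distance between nonempty compact2 sets is <= r
   (the infimum distance to a compact2 set is attained). *)
Definition hausdorff_le (A B : pset) (r : R) : Prop :=
  (forall a, A a -> exists b, B b /\ dist2 a b <= r) /\
  (forall b, B b -> exists a, A a /\ dist2 a b <= r).

(* Main.v *)
Require Import Defs.
From Stdlib Require Import Reals Lra Lia Psatz ClassicalEpsilon Classical.
Open Scope R_scope.

Lemma choice_nat {A : Type} (P : nat -> A -> Prop) :
  (forall n, exists a, P n a) -> exists f : nat -> A, forall n, P n (f n).
Proof.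
  intros H. exists (fun n => proj1_sig (constructive_indefinite_description _ (H n))).
  intros n. exact (proj2_sig (constructive_indefinite_description _ (H n))).
Qed.

Definition incr (phi : nat -> nat) := forall n m, (n < m)%nat -> (phi n < phi m)%nat.

Lemma incr_ge phi : incr phi -> forall n, (n <= phi n)%nat.
Proof. intros H n; induction n; [lia|]. specialize (H n (S n)); lia. Qed.

Lemma incr_comp phi psi : incr phi -> incr psi -> incr (fun n => phi (psi n)).
Proof. intros H1 H2 n m Hnm. apply H1, H2, Hnm. Qed.

Lemma incr_S phi : (forall n, (phi n < phi (S n))%nat) -> incr phi.
Proof.
  intros H n m Hnm. induction m; [lia|].
  destruct (Nat.eq_dec n m) as [->|Hne]; [apply H|].
  specialize (IHm ltac:(lia)). specialize (H m). lia.
Qed.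

Lemma Un_cv_sub u l phi : incr phi -> Un_cv u l -> Un_cv (fun n => u (phi n)) l.
Proof.
  intros Hp Hu eps He. destruct (Hu eps He) as [N HN]. exists N.
  intros n Hn. apply HN. pose proof (incr_ge phi Hp n). lia.
Qed.

Lemma Un_cv_ext a b l : (forall n, a n = b n) -> Un_cv a l -> Un_cv b l.
Proof. intros H Ha eps He. destruct (Ha eps He) as [N HN]. exists N.
  intros n Hn. rewrite <- H. apply HN, Hn. Qed.

Lemma Un_cv_const c : Un_cv (fun _ => c) c.
Proof. intros eps He. exists 0%nat. intros. unfold Rdist. rewrite Rminus_diag, Rabs_R0. lra. Qed.

Lemma Un_cv_pow2 a l : Un_cv a l -> Un_cv (fun n => a n ^ 2) (l ^ 2).
Proof. intros H. replace (l^2) with (l*l) by ring.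
  apply Un_cv_ext with (fun n => a n * a n). intros; ring. apply CV_mult; auto. Qed.

Lemma inv_small eps : eps > 0 -> exists N, / (INR N + 1) < eps.
Proof.
  intros He. destruct (INR_unbounded (/eps)) as [N HN]. exists N.
  pose proof (pos_INR N).
  apply Rlt_le_trans with (/ / eps). apply Rinv_lt_contravar.
  apply Rmult_lt_0_compat. apply Rinv_0_lt_compat; lra. lra. lra.
  rewrite Rinv_inv. lra.
Qed.

Lemma cv_inv : Un_cv (fun n => / (INR n + 1)) 0.
Proof.
  intros eps He. destruct (inv_small eps He) as [N HN]. exists N. intros n Hn.
  unfold Rdist. rewrite Rminus_0_r. pose proof (pos_INR n).
  rewrite Rabs_right. apply Rle_lt_trans with (/ (INR N + 1)); auto.
  apply Rinv_le_contravar. pose proof (pos_INR N); lra. apply le_INR in Hn. lra.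
  left. apply Rinv_0_lt_compat. lra.
Qed.

Lemma BW1 (u : nat -> R) M : (forall n, Rabs (u n) <= M) ->
  exists phi l, incr phi /\ Un_cv (fun n => u (phi n)) l.
Proof.
  intros Hb.
  destruct (Bolzano_Weierstrass u (fun c => -M <= c <= M) (compact_P3 (-M) M)) as [l Hl].
  { intros n. specialize (Hb n). unfold Rabs in Hb. destruct (Rcase_abs (u n)); lra. }
  assert (Hg : forall p : nat * nat, exists q, (fst p <= q)%nat /\ Rabs (u q - l) < / (INR (snd p) + 1)).
  { intros [N k]. simpl.
    assert (Hpos : 0 < / (INR k + 1)). { apply Rinv_0_lt_compat. pose proof (pos_INR k); lra. }
    destruct (Hl (disc l (mkposreal _ Hpos)) N) as [p [Hp1 Hp2]].
    { exists (mkposreal _ Hpos). intros x Hx. exact Hx. }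
    exists p. split; auto. }
  assert (X : forall p : nat*nat, { q | (fst p <= q)%nat /\ Rabs (u q - l) < / (INR (snd p) + 1)}).
  { intros p. apply constructive_indefinite_description, Hg. }
  set (g := fun p => proj1_sig (X p)).
  assert (Hgg : forall p, (fst p <= g p)%nat /\ Rabs (u (g p) - l) < / (INR (snd p) + 1)).
  { intros p. exact (proj2_sig (X p)). }
  set (phi := fix f (n : nat) : nat := match n with O => g (0%nat, 0%nat) | S m => g (S (f m), S m) end).
  exists phi, l. split.
  - apply incr_S. intros n. simpl. destruct (Hgg (S (phi n), S n)) as [H1 _]. simpl in H1. lia.
  - intros eps He. destruct (inv_small eps He) as [N HN]. exists N. intros n Hn.
    unfold Rdist.
    assert (Hn' : Rabs (u (phi n) - l) < / (INR n + 1)).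
    { destruct n; simpl; [exact (proj2 (Hgg (0%nat,0%nat)))|].
      exact (proj2 (Hgg (S (phi n), S n))). }
    eapply Rlt_le_trans; [exact Hn'|].
    left. eapply Rle_lt_trans; [|exact HN].
    apply Rinv_le_contravar. pose proof (pos_INR N); lra. apply le_INR in Hn. lra.
Qed.

Definition cv2 (s : nat -> pt) (l : pt) :=
  Un_cv (fun n => fst (s n)) (fst l) /\ Un_cv (fun n => snd (s n)) (snd l).

Lemma Rabs_sq x : Rabs x * Rabs x = x * x.
Proof. unfold Rabs; destruct (Rcase_abs x); nra. Qed.

Lemma sqrt_le_sq a b : 0 <= b -> a <= b * b -> sqrt a <= b.
Proof. intros Hb H. destruct (Rle_dec 0 a).
  rewrite <- (sqrt_square b Hb). apply sqrt_le_1_alt. auto.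
  rewrite sqrt_neg_0 by lra. auto. Qed.

Lemma abs_le_sqrt x a : x * x <= a -> Rabs x <= sqrt a.
Proof. intros H. rewrite <- sqrt_Rsqr_abs. apply sqrt_le_1_alt. unfold Rsqr. auto. Qed.

Lemma dist_fst p q : Rabs (fst p - fst q) <= dist2 p q.
Proof. unfold dist2. apply abs_le_sqrt. pose proof (Rle_0_sqr (snd p - snd q)). unfold Rsqr in *. simpl. nra. Qed.
Lemma dist_snd p q : Rabs (snd p - snd q) <= dist2 p q.
Proof. unfold dist2. apply abs_le_sqrt. pose proof (Rle_0_sqr (fst p - fst q)). unfold Rsqr in *. simpl. nra. Qed.

Lemma dist_sum p q : dist2 p q <= Rabs (fst p - fst q) + Rabs (snd p - snd q).
Proof. unfold dist2. apply sqrt_le_sq.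
  pose proof (Rabs_pos (fst p - fst q)); pose proof (Rabs_pos (snd p - snd q)); lra.
  pose proof (Rabs_sq (fst p - fst q)); pose proof (Rabs_sq (snd p - snd q)).
  pose proof (Rabs_pos (fst p - fst q)); pose proof (Rabs_pos (snd p - snd q)). simpl. nra. Qed.

Lemma dot_bound p q u : unit_vec u -> Rabs (dot p u - dot q u) <= dist2 p q.
Proof. unfold unit_vec, dot, dist2. intros H. apply abs_le_sqrt. simpl in *.
  set (a := fst p - fst q). set (b := snd p - snd q).
  replace (fst p * fst u + snd p * snd u - (fst q * fst u + snd q * snd u)) with (a * fst u + b * snd u) by (unfold a, b; ring).
  assert (E: (a*a + b*b) = (a*a+b*b) * (fst u * (fst u * 1) + snd u * (snd u * 1))) by (rewrite H; ring).
  pose proof (Rle_0_sqr (a * snd u - b * fst u)). unfold Rsqr in *. nra. Qed.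

Lemma seq_conv_cv2 s l : seq_conv s l -> cv2 s l.
Proof. intros H; split; intros eps He; destruct (H eps He) as [N HN]; exists N; intros n Hn;
  unfold Rdist; eapply Rle_lt_trans; try apply (HN n Hn). apply dist_fst. apply dist_snd. Qed.

Lemma cv2_seq_conv s l : cv2 s l -> seq_conv s l.
Proof. intros [H1 H2] eps He. destruct (H1 (eps/2) ltac:(lra)) as [N1 HN1].
  destruct (H2 (eps/2) ltac:(lra)) as [N2 HN2]. exists (max N1 N2). intros n Hn.
  eapply Rle_lt_trans; [apply dist_sum|].
  specialize (HN1 n ltac:(lia)); specialize (HN2 n ltac:(lia)). unfold Rdist in *. lra. Qed.

Lemma cv2_sub s l phi : incr phi -> cv2 s l -> cv2 (fun n => s (phi n)) l.
Proof. intros Hp [H1 H2]; split.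
  exact (Un_cv_sub (fun n => fst (s n)) _ _ Hp H1).
  exact (Un_cv_sub (fun n => snd (s n)) _ _ Hp H2). Qed.

Lemma cv_dot a b la lb : cv2 a la -> cv2 b lb -> Un_cv (fun n => dot (a n) (b n)) (dot la lb).
Proof. intros [H1 H2] [H3 H4]. unfold dot. apply CV_plus; apply CV_mult; auto. Qed.

Lemma cv2_const c : cv2 (fun _ => c) c.
Proof. split; apply Un_cv_const. Qed.

Lemma cv2_popp s l : cv2 s l -> cv2 (fun n => popp (s n)) (popp l).
Proof. intros [H1 H2]; split; simpl; apply CV_opp; auto. Qed.

Lemma cv2_mid a b la lb : cv2 a la -> cv2 b lb ->
  cv2 (fun n => pscale (1/2) (padd (a n) (b n))) (pscale (1/2) (padd la lb)).
Proof. intros [H1 H2] [H3 H4]; split; simpl; apply CV_mult; try apply Un_cv_const; apply CV_plus; auto. Qed.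

Lemma compact_extract A s : compact2 A -> (forall n, A (s n)) ->
  exists phi l, incr phi /\ A l /\ cv2 (fun n => s (phi n)) l.
Proof. intros HA Hs. destruct (HA s Hs) as [phi [l [H1 [H2 H3]]]].
  exists phi, l. repeat split; auto; apply seq_conv_cv2 in H3; apply H3. Qed.

Lemma circle_extract s : (forall n, unit_vec (s n)) ->
  exists phi l, incr phi /\ unit_vec l /\ cv2 (fun n => s (phi n)) l.
Proof.
  intros Hs.
  destruct (BW1 (fun n => fst (s n)) 1) as [phi1 [l1 [Hp1 Hc1]]].
  { intros n. specialize (Hs n). unfold unit_vec in Hs. simpl in Hs.
    pose proof (Rle_0_sqr (snd (s n))). unfold Rsqr in *.
    unfold Rabs; destruct (Rcase_abs (fst (s n))); nra. }
  destruct (BW1 (fun n => snd (s (phi1 n))) 1) as [phi2 [l2 [Hp2 Hc2]]].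
  { intros n. specialize (Hs (phi1 n)). unfold unit_vec in Hs. simpl in Hs.
    pose proof (Rle_0_sqr (fst (s (phi1 n)))). unfold Rsqr in *.
    unfold Rabs; destruct (Rcase_abs (snd (s (phi1 n)))); nra. }
  exists (fun n => phi1 (phi2 n)), (l1, l2). split; [apply incr_comp; auto|].
  assert (Hc : cv2 (fun n => s (phi1 (phi2 n))) (l1, l2)).
  { split; simpl. apply (Un_cv_sub (fun n => fst (s (phi1 n))) l1 phi2 Hp2 Hc1). exact Hc2. }
  split; auto.
  destruct Hc as [Ha Hb]. unfold unit_vec. simpl in *.
  pose proof (CV_plus _ _ _ _ (Un_cv_pow2 _ _ Ha) (Un_cv_pow2 _ _ Hb)) as Hsum.
  apply (UL_sequence _ _ _ Hsum). apply Un_cv_ext with (fun _ => 1). intros n. symmetry. apply Hs.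
  apply Un_cv_const.
Qed.

Lemma support_limit K us u xs x : cv2 us u -> cv2 xs x -> K x ->
  (forall n, support_point K (us n) (xs n)) -> support_point K u x.
Proof.
  intros Hu Hx Kx Hs. split; auto. intros y Hy.
  apply (@Rle_cv_lim (fun n => dot y (us n)) (fun n => dot (xs n) (us n))).
  intros n. apply (proj2 (Hs n)), Hy.
  apply (cv_dot (fun _ => y) us y u (cv2_const y) Hu).
  apply (cv_dot xs us x u Hx Hu).
Qed.

Lemma exists_support K u : convex_body K -> exists x, support_point K u x.
Proof.
  intros [[p Kp] [HK _]].
  assert (Hbd : exists M, forall y, K y -> dot y u <= M).
  { apply NNPP. intros Hn.
    assert (H : forall n : nat, exists y, K y /\ dot y u > INR n).
    { intros n. apply NNPP. intros Hn2. apply Hn. exists (INR n). intros y Ky.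
      apply Rnot_lt_le. intros Hlt. apply Hn2. exists y. split; auto. }
    destruct (choice_nat _ H) as [ys Hys].
    destruct (compact_extract K ys HK (fun n => proj1 (Hys n))) as [phi [l [Hp [Kl Hc]]]].
    pose proof (cv_dot _ (fun _ => u) _ u Hc (cv2_const u)) as Hd.
    destruct (Hd 1 ltac:(lra)) as [N HN].
    destruct (INR_unbounded (dot l u + 1)) as [m Hm].
    specialize (HN (max N m) ltac:(lia)). unfold Rdist in HN. simpl in HN.
    pose proof (proj2 (Hys (phi (max N m)))).
    pose proof (incr_ge phi Hp (max N m)). apply le_INR in H1.
    assert (INR m <= INR (max N m)) by (apply le_INR; lia).
    unfold Rabs in HN; destruct (Rcase_abs _) in HN; lra. }
  destruct Hbd as [M HM].
  set (E := fun r => exists y, K y /\ r = dot y u).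
  destruct (completeness E) as [S [HS1 HS2]].
  { exists M. intros r [y [Ky ->]]. apply HM, Ky. }
  { exists (dot p u). exists p. auto. }
  assert (H : forall n : nat, exists y, K y /\ dot y u > S - / (INR n + 1)).
  { intros n. apply NNPP. intros Hn.
    assert (Hpos : 0 < / (INR n + 1)) by (apply Rinv_0_lt_compat; pose proof (pos_INR n); lra).
    assert (S <= S - / (INR n + 1)); [|lra].
    apply HS2. intros r [y [Ky ->]]. apply Rnot_lt_le. intros Hlt. apply Hn. exists y. split; auto. }
  destruct (choice_nat _ H) as [ys Hys].
  destruct (compact_extract K ys HK (fun n => proj1 (Hys n))) as [phi [l [Hp [Kl Hc]]]].
  exists l. split; auto. intros y Ky.
  apply Rle_trans with S. apply HS1. exists y; auto.
  apply (@Rle_cv_lim (fun n => S - / (INR (phi n) + 1)) (fun n => dot (ys (phi n)) u)).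
  intros n. left. apply (proj2 (Hys (phi n))).
  assert (Hc0 := CV_minus _ _ _ _ (Un_cv_const S) (Un_cv_sub _ _ phi Hp cv_inv)).
  rewrite Rminus_0_r in Hc0. exact Hc0.
  apply (cv_dot _ (fun _ => u) _ u Hc (cv2_const u)).
Qed.

Lemma support_unique K u x y : strictly_convex_body K -> unit_vec u ->
  support_point K u x -> support_point K u y -> x = y.
Proof.
  intros [[_ [_ Hconv]] Hsc] Hu [Kx Hx] [Ky Hy].
  apply NNPP. intros Hne. apply Hsc. exists x, y. split; auto.
  intros t Ht. assert (Exy : dot x u = dot y u) by (pose proof (Hx y Ky); pose proof (Hy x Kx); lra).
  set (z := padd (pscale (1 - t) x) (pscale t y)).
  assert (Kz : K z) by (apply Hconv; auto).
  assert (Ez : dot z u = dot x u) by (unfold z, dot, padd, pscale in *; simpl in *; nra).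
  clearbody z. split; auto. intros e He.
  exists (padd z (pscale (e/2) u)). split.
  - unfold dist2. apply Rle_lt_trans with (e/2); [|lra]. apply sqrt_le_sq. lra.
    unfold unit_vec in Hu. unfold padd, pscale; simpl in *.
    replace ((fst z - (fst z + e / 2 * fst u)) * ((fst z - (fst z + e / 2 * fst u)) * 1) +
      (snd z - (snd z + e / 2 * snd u)) * ((snd z - (snd z + e / 2 * snd u)) * 1))
      with ((e/2)*(e/2) * (fst u * (fst u * 1) + snd u * (snd u * 1))) by ring.
    rewrite Hu. lra.
  - intros Kw. pose proof (Hx _ Kw). unfold unit_vec in Hu.
    unfold dot, padd, pscale in *; simpl in *.
    assert (fst u * (fst u * 1) + snd u * (snd u * 1) = fst u * fst u + snd u * snd u) by ring.
    nra.
Qed.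

Theorem part1 K : convex_body K ->
  nonempty (middle_hedgehog K) /\ compact2 (middle_hedgehog K).
Proof.
  intros HK. split.
  - destruct (exists_support K (1,0) HK) as [x Hx].
    destruct (exists_support K (popp (1,0)) HK) as [y Hy].
    exists (pscale (1/2) (padd x y)), (1,0), x, y.
    split; [|split; [exact Hx|split; [exact Hy|reflexivity]]].
    unfold unit_vec; simpl; ring.
  - pose proof HK as [_ [HKc _]].
    intros s Hs.
    destruct (choice_nat (fun n (t : pt * pt * pt) => let '(u, x, y) := t in
       unit_vec u /\ support_point K u x /\ support_point K (popp u) y /\
       s n = pscale (1/2) (padd x y))) as [f Hf].
    { intros n. destruct (Hs n) as [u [x [y H]]]. exists (u, x, y). exact H. }
    set (us := fun n => fst (fst (f n))). set (xs := fun n => snd (fst (f n))).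
    set (ys := fun n => snd (f n)).
    assert (Hf' : forall n, unit_vec (us n) /\ support_point K (us n) (xs n) /\
       support_point K (popp (us n)) (ys n) /\ s n = pscale (1/2) (padd (xs n) (ys n))).
    { intros n. specialize (Hf n). unfold us, xs, ys. destruct (f n) as [[a b] c]. exact Hf. }
    destruct (circle_extract us (fun n => proj1 (Hf' n))) as [p1 [u [Hp1 [Hu Hcu]]]].
    destruct (compact_extract K (fun n => xs (p1 n)) HKc (fun n => proj1 (proj1 (proj2 (Hf' (p1 n))))))
      as [p2 [x [Hp2 [Kx Hcx]]]].
    destruct (compact_extract K (fun n => ys (p1 (p2 n))) HKc
       (fun n => proj1 (proj1 (proj2 (proj2 (Hf' (p1 (p2 n))))))))
      as [p3 [y [Hp3 [Ky Hcy]]]].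
    exists (fun n => p1 (p2 (p3 n))), (pscale (1/2) (padd x y)).
    set (q := fun n => p1 (p2 (p3 n))).
    assert (Cu : cv2 (fun n => us (q n)) u).
    { apply (cv2_sub (fun n => us (p1 n)) u (fun n => p2 (p3 n))); auto. apply incr_comp; auto. }
    assert (Cx : cv2 (fun n => xs (q n)) x).
    { apply (cv2_sub (fun n => xs (p1 (p2 n))) x p3); auto. }
    assert (Cy : cv2 (fun n => ys (q n)) y) by exact Hcy.
    split; [unfold q; apply incr_comp; [auto|apply incr_comp; auto]|].
    split.
    + exists u, x, y. split; auto. split.
      * apply (support_limit K (fun n => us (q n)) u (fun n => xs (q n)) x Cu Cx Kx).
        intros n. apply (Hf' (q n)).
      * split; auto.
        apply (support_limit K (fun n => popp (us (q n))) (popp u) (fun n => ys (q n)) y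
          (cv2_popp _ _ Cu) Cy Ky).
        intros n. apply (Hf' (q n)).
    + apply cv2_seq_conv.
      destruct (cv2_mid _ _ _ _ Cx Cy) as [M1 M2].
      split.
      * eapply Un_cv_ext; [|exact M1]. intros n. simpl. fold (q n). rewrite (proj2 (proj2 (proj2 (Hf' (q n))))). reflexivity.
      * eapply Un_cv_ext; [|exact M2]. intros n. simpl. fold (q n). rewrite (proj2 (proj2 (proj2 (Hf' (q n))))). reflexivity.
Qed.

Lemma Rabs_le_b x a : Rabs x <= a -> -a <= x <= a.
Proof. unfold Rabs; destruct (Rcase_abs x); lra. Qed.
Lemma Rabs_lt_b x a : Rabs x < a -> -a < x < a.
Proof. unfold Rabs; destruct (Rcase_abs x); lra. Qed.

Lemma unit_popp u : unit_vec u -> unit_vec (popp u).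
Proof. unfold unit_vec, popp. intros H. cbn [fst snd]. transitivity (fst u ^ 2 + snd u ^ 2); [ring|exact H]. Qed.

Lemma mid_lemma e x y x' y' :
  Rabs (fst x - fst x') + Rabs (snd x - snd x') <= e / 2 ->
  Rabs (fst y - fst y') + Rabs (snd y - snd y') <= e / 2 ->
  dist2 (pscale (1/2) (padd x y)) (pscale (1/2) (padd x' y')) <= e.
Proof.
  intros H1 H2. eapply Rle_trans; [apply dist_sum|]. simpl.
  revert H1 H2. unfold Rabs.
  repeat match goal with |- context [Rcase_abs ?a] => destruct (Rcase_abs a) end; lra.
Qed.

Lemma key K : strictly_convex_body K -> forall e, e > 0 -> exists d, d > 0 /\
  forall L u x x', unit_vec u -> hausdorff_le K L d -> support_point K u x ->
    support_point L u x' -> Rabs (fst x - fst x') + Rabs (snd x - snd x') <= e.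
Proof.
  intros HK e He. pose proof HK as [[_ [HKc _]] _].
  apply NNPP. intros Hn.
  set (d := fun n : nat => / (INR n + 1)).
  assert (Hdpos : forall n, d n > 0) by (intros n; unfold d; apply Rinv_0_lt_compat; pose proof (pos_INR n); lra).
  assert (H : forall n, exists t : pset * pt * pt * pt, let '(L, u, x, x') := t in
    unit_vec u /\ hausdorff_le K L (d n) /\ support_point K u x /\ support_point L u x' /\
    Rabs (fst x - fst x') + Rabs (snd x - snd x') > e).
  { intros n. apply NNPP. intros Hn2. apply Hn. exists (d n). split; auto.
    intros L u x x' H1 H2 H3 H4. apply Rnot_lt_le. intros H5. apply Hn2.
    exists (L, u, x, x'). auto. }
  destruct (choice_nat _ H) as [f Hf].
  set (Ls := fun n => fst (fst (fst (f n)))). set (us := fun n => snd (fst (fst (f n)))).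
  set (xs := fun n => snd (fst (f n))). set (x's := fun n => snd (f n)).
  assert (Hf' : forall n, unit_vec (us n) /\ hausdorff_le K (Ls n) (d n) /\
    support_point K (us n) (xs n) /\ support_point (Ls n) (us n) (x's n) /\
    Rabs (fst (xs n) - fst (x's n)) + Rabs (snd (xs n) - snd (x's n)) > e).
  { intros n. specialize (Hf n). unfold Ls, us, xs, x's. destruct (f n) as [[[a b] c] g]. exact Hf. }
  clearbody Ls us xs x's.
  assert (Hk : forall n, exists k, K k /\ dist2 k (x's n) <= d n).
  { intros n. destruct (Hf' n) as [_ [[_ Hh] [_ [[Lx _] _]]]]. apply Hh, Lx. }
  destruct (choice_nat _ Hk) as [ks Hks].
  destruct (circle_extract us (fun n => proj1 (Hf' n))) as [p1 [u [Hp1 [Hu Hcu]]]].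
  destruct (compact_extract K (fun n => xs (p1 n)) HKc (fun n => proj1 (proj1 (proj2 (proj2 (Hf' (p1 n)))))))
      as [p2 [x [Hp2 [Kx Hcx]]]].
  destruct (compact_extract K (fun n => ks (p1 (p2 n))) HKc (fun n => proj1 (Hks (p1 (p2 n)))))
      as [p3 [k [Hp3 [Kk Hck]]]].
  set (q := fun n => p1 (p2 (p3 n))).
  assert (Hq : incr q) by (unfold q; apply incr_comp; [auto|apply incr_comp; auto]).
  assert (Cu : cv2 (fun n => us (q n)) u).
  { apply (cv2_sub (fun n => us (p1 n)) u (fun n => p2 (p3 n))); auto. apply incr_comp; auto. }
  assert (Cx : cv2 (fun n => xs (q n)) x).
  { apply (cv2_sub (fun n => xs (p1 (p2 n))) x p3); auto. }
  assert (Ck : cv2 (fun n => ks (q n)) k) by exact Hck.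
  assert (Cd : Un_cv (fun n => d (q n)) 0) by (apply (Un_cv_sub d 0 q Hq cv_inv)).
  clearbody q.
  assert (Sx : support_point K u x).
  { apply (support_limit K (fun n => us (q n)) u (fun n => xs (q n)) x Cu Cx Kx).
    intros n. apply (Hf' (q n)). }
  assert (Sk : support_point K u k).
  { split; auto. intros y Ky.
    apply (@Rle_cv_lim (fun n => dot y (us (q n))) (fun n => dot (ks (q n)) (us (q n)) + 2 * d (q n))).
    - intros n. set (m := q n).
      destruct (Hf' m) as [Hum [[Hh _] [_ [[_ Sx'] _]]]].
      destruct (Hh y Ky) as [l [Ll Hl]].
      pose proof (Sx' l Ll).
      pose proof (Rabs_le_b _ _ (Rle_trans _ _ _ (dot_bound y l _ Hum) Hl)).
      pose proof (Rabs_le_b _ _ (Rle_trans _ _ _ (dot_bound (ks m) (x's m) _ Hum) (proj2 (Hks m)))).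
      lra.
    - apply (cv_dot (fun _ => y) _ y u (cv2_const y) Cu).
    - replace (dot k u) with (dot k u + 2 * 0) by ring. apply CV_plus.
      apply (cv_dot _ _ _ _ Ck Cu). apply CV_mult. apply Un_cv_const. exact Cd. }
  assert (Exk : x = k) by (apply (support_unique K u); auto).
  subst k.
  destruct Cx as [Cx1 Cx2]. destruct Ck as [Ck1 Ck2].
  destruct (Cx1 (e/8) ltac:(lra)) as [N1 HN1]. destruct (Cx2 (e/8) ltac:(lra)) as [N2 HN2].
  destruct (Ck1 (e/8) ltac:(lra)) as [N3 HN3]. destruct (Ck2 (e/8) ltac:(lra)) as [N4 HN4].
  destruct (Cd (e/8) ltac:(lra)) as [N5 HN5].
  set (n := (N1 + N2 + N3 + N4 + N5)%nat).
  specialize (HN1 n ltac:(unfold n; lia)). specialize (HN2 n ltac:(unfold n; lia)).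
  specialize (HN3 n ltac:(unfold n; lia)). specialize (HN4 n ltac:(unfold n; lia)).
  specialize (HN5 n ltac:(unfold n; lia)). unfold Rdist in *.
  apply Rabs_lt_b in HN1. apply Rabs_lt_b in HN2. apply Rabs_lt_b in HN3. apply Rabs_lt_b in HN4.
  apply Rabs_lt_b in HN5.
  pose proof (proj2 (proj2 (proj2 (proj2 (Hf' (q n)))))) as Hbig.
  pose proof (Rabs_le_b _ _ (Rle_trans _ _ _ (dist_fst (ks (q n)) (x's (q n))) (proj2 (Hks (q n))))).
  pose proof (Rabs_le_b _ _ (Rle_trans _ _ _ (dist_snd (ks (q n)) (x's (q n))) (proj2 (Hks (q n))))).
  revert Hbig. unfold Rabs.
  repeat match goal with |- context [Rcase_abs ?a] => destruct (Rcase_abs a) end; lra.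
Qed.

Theorem mainTheorem3 :
  (forall K, strictly_convex_body K ->
     nonempty (middle_hedgehog K) /\ compact2 (middle_hedgehog K)) /\
  (forall K, strictly_convex_body K ->
     forall eps, eps > 0 -> exists delta, delta > 0 /\
       forall L, strictly_convex_body L -> hausdorff_le K L delta ->
         hausdorff_le (middle_hedgehog K) (middle_hedgehog L) eps).
Proof.
  split.
  - intros K HK. apply part1, HK.
  - intros K HK eps Heps.
    destruct (key K HK (eps/2) ltac:(lra)) as [d [Hd Hkey]].
    exists d. split; auto. intros L HL HKL. pose proof (proj1 HK) as HKb. pose proof (proj1 HL) as HLb.
    split.
    + intros m [u [x [y [Hu [Sx [Sy ->]]]]]].
      destruct (exists_support L u HLb) as [x' Sx'].
      destruct (exists_support L (popp u) HLb) as [y' Sy'].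
      exists (pscale (1/2) (padd x' y')). split.
      * exists u, x', y'. auto.
      * apply mid_lemma; [apply (Hkey L u); auto|apply (Hkey L (popp u)); auto; apply unit_popp; auto].
    + intros m [u [x' [y' [Hu [Sx' [Sy' ->]]]]]].
      destruct (exists_support K u HKb) as [x Sx].
      destruct (exists_support K (popp u) HKb) as [y Sy].
      exists (pscale (1/2) (padd x y)). split.
      * exists u, x, y. auto.
      * apply mid_lemma; [apply (Hkey L u); auto|apply (Hkey L (popp u)); auto; apply unit_popp; auto].
Qed.
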